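(* Let $\mathcal{H}_S$ (system) and $\mathcal{H}_B$ (bath) be Hilbert spaces (with all traces below finite, e.g. finite-dimensional). Let $H_S(s)$, $s\in[0,t]$, be a (possibly time-dependent) self-adjoint system Hamiltonian, $H_B$ a time-independent self-adjoint bath Hamiltonian, and $U_t$ any unitary on $\mathcal{H}_S\otimes\mathcal{H}_B$. Fix $\beta_S,\beta_B>0$, put $\Delta\beta=\beta_B-\beta_S$, and set $Z_S(s)={\rm Tr}[e^{-\beta_S H_S(s)}]$, $\tau_S(s)=e^{-\beta_S H_S(s)}/Z_S(s)$, $Z_B={\rm Tr}[e^{-\beta_B H_B}]$, $\tau_B=e^{-\beta_B H_B}/Z_B$, $F_S(s)=-\beta_S^{-1}\ln Z_S(s)$, $\Delta F_S=F_S(t)-F_S(0)$. Let $\{|\epsilon\rangle\}$ be an orthonormal eigenbasis of $H_S(0)$ with eigenvalues $\epsilon$. Define $\Phi_t(\rho)={\rm Tr}_B[U_t(\rho\otimes\tau_B)U_t^\dagger]$, $\Delta\tilde E(\epsilon)={\rm Tr}[H_S(t)\Phi_t(|\epsilon\rangle\langle\epsilon|)]-\epsilon$, $\tilde Z_S(t)=\sum_\epsilon e^{-\beta_S{\rm Tr}[H_S(t)\Phi_t(|\epsilon\rangle\langle\epsilon|)]}$, $$\Theta_{SB}(t)=\sum_\epsilon \frac{e^{-\beta_S{\rm Tr}[H_S(t)\Phi_t(|\epsilon\rangle\langle\epsilon|)]}}{\tilde Z_S(t)}\,U_t(|\epsilon\rangle\langle\epsilon|\otimes\tau_B)U_t^\dagger,\qquad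 \tilde\rho_S(t)={\rm Tr}_B[\Theta_{SB}(t)],$$ $\langle\tilde Q\rangle_B={\rm Tr}[H_B\tau_B]-{\rm Tr}[(\mathbb{1}_S\otimes H_B)\Theta_{SB}(t)]$, and $\tilde W(\epsilon)=\Delta\tilde E(\epsilon)-\langle\tilde Q\rangle_B$. Writing $\langle f\rangle_{\tilde P}=\sum_\epsilon\frac{e^{-\beta_S\epsilon}}{Z_S(0)}f(\epsilon)$ and $\langle\tilde W\rangle=\langle\tilde W\rangle_{\tilde P}$, one has $$\langle e^{-\beta_S\tilde W}\rangle_{\tilde P}=e^{-\beta_S\Delta F_S}\,e^{-D[\Theta_{SB}(t)\|\tau_S(t)\otimes\tau_B]}\,e^{-\Delta\beta\,\langle\tilde Q\rangle_B},$$ and consequently $$\langle\tilde W\rangle\ \ge\ \Delta F_S+\beta_S^{-1}D[\tilde\rho_S(t)\|\tau_S(t)]+\frac{\Delta\beta}{\beta_S}\langle\tilde Q\rangle_B,$$ where $D[\rho\|\sigma]={\rm Tr}[\rho\ln\rho]-{\rm Tr}[\rho\ln\sigma]$ is the quantum relative entropy.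
   Context: Setting: system initially thermal at inverse temperature $\beta_S$, bath initially thermal at inverse temperature $\beta_B$; an initial energy measurement of the system yields $\epsilon$ with probability $e^{-\beta_S\epsilon}/Z_S(0)$, followed by joint evolution $U_t$ of $|\epsilon\rangle\langle\epsilon|\otimes\tau_B$. $\langle\tilde Q\rangle_B$ (guessed quantum heat) is a constant independent of $\epsilon$. *)

(* Defs.v *)
From mathcomp Require Import all_boot all_order all_algebra.
From mathcomp Require Import reals.
From mathcomp Require Import sequences exp.
From mathcomp Require Import complex.
From mathcomp Require mxtens.
Set Implicit Arguments. Unset Strict Implicit. Unset Printing Implicit Defensive.
Import Order.TTheory GRing.Theory Num.Theory.
Local Open Scope ring_scope.

Section QDefs.
Variable R : realType.
Local Notation C := R[i].

Definition RC (x : R) : C := (x%:C)%C.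

Definition adj m n (A : 'M[C]_(m, n)) : 'M[C]_(n, m) := (map_mx Num.conj A)^T.

Definition tens m n p q (A : 'M[C]_(m, n)) (B : 'M[C]_(p, q)) : 'M[C]_(m * p, n * q) :=
  mxtens.tensmx A B.

Definition ptrB n m (X : 'M[C]_(n * m)) : 'M[C]_n :=
  \matrix_(i, j) \sum_(k < m) X (mxtens.mxtens_index (i, k)) (mxtens.mxtens_index (j, k)).

(* functional calculus f(A) for a self-adjoint (normal) matrix A, through the
   library's spectral decomposition A = P^-1 diag(sp) P (spectral.v);
   for hermitian A the spectrum sp is real and f acts on it. *)
Definition mfun n (f : R -> R) (A : 'M[C]_n) : 'M[C]_n :=
  invmx (spectralmx A) *m diag_mx (map_mx (fun z => RC (f (complex.Re z))) (spectral_diag A))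
    *m spectralmx A.

Definition boltz n (beta : R) (H : 'M[C]_n) : 'M[C]_n := mfun (fun x => expR (- beta * x)) H.
Definition partZ n (beta : R) (H : 'M[C]_n) : R := complex.Re (\tr (boltz beta H)).
Definition gibbs n (beta : R) (H : 'M[C]_n) : 'M[C]_n := RC (partZ beta H)^-1 *: boltz beta H.
Definition freeF n (beta : R) (H : 'M[C]_n) : R := - beta^-1 * ln (partZ beta H).

Definition mln n (A : 'M[C]_n) : 'M[C]_n := mfun (@ln R) A.
Definition relent n (rho sigma : 'M[C]_n) : R :=
  complex.Re (\tr (rho *m mln rho)) - complex.Re (\tr (rho *m mln sigma)).

Definition Phi n m (U : 'M[C]_(n * m)) (tauB : 'M[C]_m) (rho : 'M[C]_n) : 'M[C]_n :=
  ptrB (U *m tens rho tauB *m adj U).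

(* |eps_i><eps_i| where |eps_i> is the i-th column of V *)
Definition proj n (V : 'M[C]_n) (i : 'I_n) : 'M[C]_n := col i V *m adj (col i V).

Section Setting.
Variables (n m : nat) (HS0 HSt : 'M[C]_n) (HB : 'M[C]_m) (U : 'M[C]_(n * m))
  (betaS betaB : R) (V : 'M[C]_n) (e : 'I_n -> R).

Definition tauB : 'M[C]_m := gibbs betaB HB.
Definition tauSt : 'M[C]_n := gibbs betaS HSt.
Definition DeltaF : R := freeF betaS HSt - freeF betaS HS0.
Definition Efin (i : 'I_n) : R := complex.Re (\tr (HSt *m Phi U tauB (proj V i))).
Definition DeltaE (i : 'I_n) : R := Efin i - e i.
Definition Ztil : R := \sum_(i < n) expR (- betaS * Efin i).
Definition Theta : 'M[C]_(n * m) :=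
  \sum_(i < n) RC (expR (- betaS * Efin i) / Ztil) *: (U *m tens (proj V i) tauB *m adj U).
Definition rhoTil : 'M[C]_n := ptrB Theta.
Definition Qtil : R := complex.Re (\tr (HB *m tauB)) - complex.Re (\tr (tens (1%:M : 'M[C]_n) HB *m Theta)).
Definition Wtil (i : 'I_n) : R := DeltaE i - Qtil.
Definition avgP (f : 'I_n -> R) : R :=
  \sum_(i < n) expR (- betaS * e i) / partZ betaS HS0 * f i.
End Setting.

End QDefs.

(* Main.v *)
Require Import Defs.
From mathcomp Require Import all_boot all_order all_algebra.
From mathcomp Require Import reals.
From mathcomp Require Import sequences exp.
From mathcomp Require Import complex.
From mathcomp Require mxtens.
From mathcomp Require Import ring lra.
Import Order.TTheory GRing.Theory Num.Theory.
Set Implicit Arguments. Unset Strict Implicit.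
Local Open Scope ring_scope.

Section LibA.
Variable R : realType.
Local Notation C := R[i].
Local Notation idx := mxtens.mxtens_index.
Local Notation uix := mxtens.mxtens_unindex.

Lemma RC_conj (x : R) : Num.conj (RC x) = RC x.
Proof. exact: conjc_real. Qed.
Lemma ReRC (x : R) : complex.Re (RC x) = x.
Proof. by []. Qed.
Lemma ReRCM (x : R) (z : C) : complex.Re (RC x * z) = x * complex.Re z.
Proof. case: z => a b /=. by rewrite mul0r subr0. Qed.
Lemma RCD (x y : R) : RC (x + y) = RC x + RC y.
Proof. by rewrite /RC rmorphD. Qed.
Lemma RCM (x y : R) : RC (x * y) = RC x * RC y.
Proof. by rewrite /RC rmorphM. Qed.
Lemma RCN (x : R) : RC (- x) = - RC x.
Proof. by rewrite /RC rmorphN. Qed.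
Lemma RC_sum I (r : seq I) (P : pred I) (F : I -> R) :
  RC (\sum_(i <- r | P i) F i) = \sum_(i <- r | P i) RC (F i).
Proof. by rewrite /RC rmorph_sum. Qed.
Lemma RC1 : RC (1 : R) = 1. Proof. by rewrite /RC rmorph1. Qed.
Lemma RC0 : RC (0 : R) = 0. Proof. by rewrite /RC rmorph0. Qed.
Lemma ReD (x y : C) : complex.Re (x + y) = complex.Re x + complex.Re y.
Proof. by case: x; case: y. Qed.
Lemma ReN (x : C) : complex.Re (- x) = - complex.Re x.
Proof. by case: x. Qed.
Lemma ReB (x y : C) : complex.Re (x - y) = complex.Re x - complex.Re y.
Proof. by rewrite ReD ReN. Qed.
Lemma Re_sum I (r : seq I) (P : pred I) (F : I -> C) :
  complex.Re (\sum_(i <- r | P i) F i) = \sum_(i <- r | P i) complex.Re (F i).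
Proof.
elim/big_rec2: _ => [|i y1 y2 _ <-]; first by [].
by rewrite ReD.
Qed.

Lemma adjE m n (A : 'M[C]_(m, n)) : adj A = (A ^t*)%sesqui.
Proof. by rewrite /adj map_trmx. Qed.
Lemma adjK m n (A : 'M[C]_(m, n)) : adj (adj A) = A.
Proof. by apply/matrixP => i j; rewrite !mxE conjCK. Qed.
Lemma adj_mul m n p (A : 'M[C]_(m, n)) (B : 'M[C]_(n, p)) :
  adj (A *m B) = adj B *m adj A.
Proof. by rewrite /adj map_mxM trmx_mul. Qed.
Lemma adjD m n (A B : 'M[C]_(m, n)) : adj (A + B) = adj A + adj B.
Proof. by apply/matrixP => i j; rewrite !mxE rmorphD. Qed.
Lemma adjZR m n (c : R) (A : 'M[C]_(m, n)) : adj (RC c *: A) = RC c *: adj A.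
Proof. by apply/matrixP => i j; rewrite !mxE rmorphM; congr (_ * _); exact: RC_conj. Qed.
Lemma adj_sum m n I (r : seq I) (P : pred I) (F : I -> 'M[C]_(m, n)) :
  adj (\sum_(i <- r | P i) F i) = \sum_(i <- r | P i) adj (F i).
Proof.
elim/big_rec2: _ => [|i y1 y2 _ <-]; last by rewrite adjD.
by apply/matrixP => i j; rewrite !mxE rmorph0.
Qed.
Lemma adj1 n : adj (1%:M : 'M[C]_n) = 1%:M.
Proof. by apply/matrixP => i j; rewrite !mxE eq_sym; case: (_ == _); rewrite ?rmorph1 ?rmorph0. Qed.
Lemma adj_tens m n p q (A : 'M[C]_(m, n)) (B : 'M[C]_(p, q)) :
  adj (tens A B) = tens (adj A) (adj B).
Proof. by rewrite /adj /tens mxtens.map_mxT mxtens.trmx_tens. Qed.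

Lemma unitary_mulV n (U : 'M[C]_n) : U \is unitarymx -> U *m adj U = 1%:M.
Proof. by move=> /unitarymxP; rewrite adjE. Qed.
Lemma unitary_Vmul n (U : 'M[C]_n) : U \is unitarymx -> adj U *m U = 1%:M.
Proof.
move=> hU; rewrite adjE -invmx_unitary // mulVmx //; exact: unitarymx_unit.
Qed.
Lemma unitary_adj n (U : 'M[C]_n) : U \is unitarymx -> adj U \is unitarymx.
Proof. by move=> hU; apply/unitarymxP; rewrite -adjE adjK unitary_Vmul. Qed.

Lemma tens_mul m n p q r s (A : 'M[C]_(m,n)) (B : 'M[C]_(p,q)) (C' : 'M[C]_(n, r)) (D : 'M[C]_(q, s)) :
  tens A B *m tens C' D = tens (A *m C') (B *m D).
Proof. exact: mxtens.tensmx_mul. Qed.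

Lemma idx_eq n m (a b : 'I_n * 'I_m) : (idx a == idx b) = (a == b).
Proof. exact: (can_eq (@mxtens.mxtens_indexK n m)). Qed.

Lemma tensE n m p q (A : 'M[C]_(n,m)) (B : 'M[C]_(p,q)) i j k l :
  tens A B (idx (i, j)) (idx (k, l)) = A i k * B j l.
Proof. exact: mxtens.tensmxE. Qed.

Lemma tens11 n m : tens (1%:M : 'M[C]_n) (1%:M : 'M[C]_m) = 1%:M.
Proof.
apply/matrixP => a b.
case: (mxtens.mxtens_indexP a) => i j; case: (mxtens.mxtens_indexP b) => k l.
rewrite tensE !mxE idx_eq xpair_eqE.
by case: (i == k); case: (j == l); rewrite /= ?mulr1 ?mulr0 ?mul0r.
Qed.

Lemma tens_unitary n m (P : 'M[C]_n) (Q : 'M[C]_m) :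
  P \is unitarymx -> Q \is unitarymx -> tens P Q \is unitarymx.
Proof.
move=> hP hQ; apply/unitarymxP; rewrite -adjE adj_tens tens_mul.
by rewrite !unitary_mulV // tens11.
Qed.

Lemma sum_tens n m (F : 'I_(n * m) -> C) :
  \sum_(a < n * m) F a = \sum_(i < n) \sum_(j < m) F (idx (i, j)).
Proof.
rewrite pair_big /=.
rewrite (reindex (@mxtens.mxtens_index n m)) /=; last first.
  by apply: onW_bij; exists (@mxtens.mxtens_unindex n m);
    [exact: mxtens.mxtens_indexK | exact: mxtens.mxtens_unindexK].
by apply: eq_bigr => -[i j].
Qed.

Lemma sum_tensR n m (F : 'I_(n * m) -> R) :
  \sum_(a < n * m) F a = \sum_(i < n) \sum_(j < m) F (idx (i, j)).
Proof.
rewrite pair_big /=.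
rewrite (reindex (@mxtens.mxtens_index n m)) /=; last first.
  by apply: onW_bij; exists (@mxtens.mxtens_unindex n m);
    [exact: mxtens.mxtens_indexK | exact: mxtens.mxtens_unindexK].
by apply: eq_bigr => -[i j].
Qed.

Lemma tr_tens n m (A : 'M[C]_n) (B : 'M[C]_m) : \tr (tens A B) = \tr A * \tr B.
Proof.
rewrite /mxtrace sum_tens mulr_suml; apply: eq_bigr => i _.
rewrite mulr_sumr; apply: eq_bigr => j _; by rewrite tensE.
Qed.

Lemma tr_delta n (A : 'M[C]_n) i j : \tr (delta_mx j i *m A) = A i j.
Proof.
rewrite /mxtrace (bigD1 j) //= big1 ?addr0.
  rewrite !mxE (bigD1 i) //= big1 ?addr0 ?mxE ?eqxx ?mul1r //.
  by move=> k hk; rewrite !mxE eqxx (negbTE hk) mul0r.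
move=> k hk; rewrite !mxE big1 // => l _; by rewrite !mxE (negbTE hk) mul0r.
Qed.

Lemma mx_eq_tr n (A B : 'M[C]_n) : (forall Y, \tr (Y *m A) = \tr (Y *m B)) -> A = B.
Proof. by move=> h; apply/matrixP => i j; rewrite -!tr_delta h. Qed.

Lemma ptrB_tr n m (Y : 'M[C]_n) (X : 'M[C]_(n * m)) :
  \tr (Y *m ptrB X) = \tr (tens Y 1%:M *m X).
Proof.
rewrite /mxtrace sum_tens; apply: eq_bigr => i _.
rewrite mxE.
transitivity (\sum_(j < n) \sum_(k < m) Y i j * X (idx (j, k)) (idx (i, k))).
  by apply: eq_bigr => j _; rewrite mxE mulr_sumr.
rewrite exchange_big /=; apply: eq_bigr => k _.
rewrite mxE sum_tens; apply: eq_bigr => j _.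
rewrite (bigD1 k) //= big1 ?addr0.
  by rewrite tensE mxE eqxx mulr1.
by move=> l hl; rewrite tensE mxE eq_sym (negbTE hl) mulr0 mul0r.
Qed.

Lemma ptrB_adj n m (X : 'M[C]_(n * m)) : adj (ptrB X) = ptrB (adj X).
Proof. by apply/matrixP => i j; rewrite !mxE rmorph_sum; apply: eq_bigr => k _; rewrite !mxE. Qed.

Lemma ptrB_conj n m (A : 'M[C]_n) (B : 'M[C]_m) (X : 'M[C]_(n * m)) :
  B \is unitarymx ->
  ptrB (tens A B *m X *m tens (adj A) (adj B)) = A *m ptrB X *m adj A.
Proof.
move=> hB; apply: mx_eq_tr => Y.
rewrite ptrB_tr.
have -> : tens Y 1%:M *m (tens A B *m X *m tens (adj A) (adj B))
  = (tens Y 1%:M *m tens A B *m X) *m tens (adj A) (adj B) by rewrite !mulmxA.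
rewrite mxtrace_mulC !mulmxA !tens_mul mulmx1 unitary_Vmul // -ptrB_tr.
rewrite -!mulmxA mxtrace_mulC !mulmxA.
done.
Qed.

End LibA.

Section LibB.
Variable R : realType.
Local Notation C := R[i].
Local Notation idx := mxtens.mxtens_index.
Local Notation uix := mxtens.mxtens_unindex.

Definition dg n (h : 'I_n -> R) : 'M[C]_n := diag_mx (\row_k RC (h k)).
Definition isdec n (P : 'M[C]_n) (h : 'I_n -> R) (A : 'M[C]_n) :=
  P \is unitarymx /\ A = adj P *m dg h *m P.

Lemma diag_comm_map n (W : 'M[C]_n) (s d : 'rV[C]_n) (g : C -> C) :
  diag_mx s *m W = W *m diag_mx d ->
  diag_mx (map_mx g s) *m W = W *m diag_mx (map_mx g d).
Proof.
move=> e1; apply/matrixP => i j; move/matrixP: e1 => /(_ i j).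
rewrite !mul_diag_mx !mul_mx_diag !mxE => hij.
have [->|nz] := eqVneq (W i j) 0; first by rewrite mulr0 mul0r.
have -> : s 0 i = d 0 j by apply: (mulIf nz); rewrite hij mulrC.
by rewrite mulrC.
Qed.

Lemma mfunE n f (Q A : 'M[C]_n) (d : 'rV[C]_n) : Q \is unitarymx ->
  A = adj Q *m diag_mx d *m Q ->
  mfun f A = adj Q *m diag_mx (map_mx (fun z => RC (f (complex.Re z))) d) *m Q.
Proof.
move=> hQ hA.
have nA : A \is normalmx.
  apply/orthomx_spectral_subproof; exists (Q, d); first exact: hQ.
  rewrite /= (invmx_unitary hQ) hA adjE; reflexivity.
have /orthomx_spectralP hA' := nA.
have hPu := spectral_unitarymx A.
move: hA'; rewrite (invmx_unitary hPu) -adjE.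
rewrite /mfun (invmx_unitary hPu) -adjE.
move: hPu.
set P := spectralmx A; set s := spectral_diag A => hPu hA'.
have e0 : adj P *m diag_mx s *m P = adj Q *m diag_mx d *m Q := etrans (esym hA') hA.
clearbody P s; clear hA hA' nA.
set W := P *m adj Q.
have e1 : diag_mx s *m W = W *m diag_mx d.
  have e3 : P *m (adj P *m diag_mx s *m P) *m adj Q = diag_mx s *m W.
    by rewrite !mulmxA (unitary_mulV hPu) mul1mx -mulmxA.
  rewrite -e3 e0 /W !mulmxA.
  by rewrite -[P *m adj Q *m diag_mx d *m Q *m adj Q]mulmxA (unitary_mulV hQ) mulmx1.
set g := fun z : C => RC (f (complex.Re z)).
have e2 := diag_comm_map g e1.
have eP : P = W *m Q by rewrite /W -mulmxA (unitary_Vmul hQ) mulmx1.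
rewrite {2}eP mulmxA -[adj P *m _ *m W]mulmxA e2 mulmxA.
rewrite /W mulmxA (unitary_Vmul hPu) mul1mx; reflexivity.
Qed.

Lemma mfun_dec n f (P A : 'M[C]_n) h : isdec P h A ->
  mfun f A = adj P *m dg (fun k => f (h k)) *m P.
Proof.
move=> [hP hA]; rewrite (mfunE f hP hA) /dg; congr (_ *m diag_mx _ *m _).
by apply/rowP => k; rewrite !mxE.
Qed.

Lemma herm_dec n (A : 'M[C]_n) : A \is hermsymmx -> exists P h, isdec P h A.
Proof.
move=> hA.
have /orthomx_spectralP hA' := hermitian_normalmx hA.
have hr := hermitian_spectral_diag_real hA.
move: (spectral_unitarymx A) hA' hr.
set P := spectralmx A; set s := spectral_diag A => hPu hA' hr.
clearbody P s.
exists P, (fun k => complex.Re (s 0 k)); split; first exact: hPu.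
rewrite hA' (invmx_unitary hPu) -adjE /dg.
congr (_ *m diag_mx _ *m _); apply/rowP => k; rewrite !mxE.
have /mxOverP /(_ 0 k) hk := hr.
by rewrite /RC (RRe_real hk).
Qed.

Lemma dg_entry n (h : 'I_n -> R) i j : dg h i j = RC (h i) *+ (i == j).
Proof. by rewrite /dg !mxE. Qed.

Lemma dg1 n : dg (fun _ : 'I_n => 1) = 1%:M.
Proof. by apply/matrixP => i j; rewrite dg_entry RC1 mxE. Qed.

Lemma dg_mul n (g h : 'I_n -> R) : dg g *m dg h = dg (fun k => g k * h k).
Proof. by rewrite /dg mulmx_diag; congr diag_mx; apply/rowP => k; rewrite !mxE RCM. Qed.

Lemma adj_dg n (h : 'I_n -> R) : adj (dg h) = dg h.
Proof.
apply/matrixP => i j; rewrite !mxE.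
have [->|ne] := eqVneq i j.
  by rewrite !mulr1n; apply: RC_conj.
by rewrite !mulr0n rmorph0.
Qed.

Lemma conj_mul n (P D1 D2 : 'M[C]_n) : P \is unitarymx ->
  (adj P *m D1 *m P) *m (adj P *m D2 *m P) = adj P *m (D1 *m D2) *m P.
Proof.
move=> hP; rewrite !mulmxA -[adj P *m D1 *m P *m adj P]mulmxA (unitary_mulV hP) mulmx1.
reflexivity.
Qed.

Lemma tr_conj n (P D : 'M[C]_n) : P \is unitarymx -> \tr (adj P *m D *m P) = \tr D.
Proof.
move=> hP; rewrite mxtrace_mulC mulmxA (unitary_mulV hP) mul1mx; reflexivity. Qed.

Lemma tr_dg n (h : 'I_n -> R) : \tr (dg h) = RC (\sum_k h k).
Proof. by rewrite /dg mxtrace_diag RC_sum; apply: eq_bigr => k _; rewrite mxE. Qed.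

Lemma tr_mul_dg n (A : 'M[C]_n) h : \tr (A *m dg h) = \sum_k A k k * RC (h k).
Proof. by rewrite /dg mul_mx_diag /mxtrace; apply: eq_bigr => k _; rewrite !mxE. Qed.

Lemma Re_tr_dec n (Z P : 'M[C]_n) h : P \is unitarymx ->
  complex.Re (\tr (Z *m (adj P *m dg h *m P))) =
  \sum_k h k * complex.Re ((P *m Z *m adj P) k k).
Proof.
move=> hP.
have -> : \tr (Z *m (adj P *m dg h *m P)) = \tr ((P *m Z *m adj P) *m dg h).
  rewrite !mulmxA mxtrace_mulC !mulmxA; reflexivity.
rewrite tr_mul_dg Re_sum.
by apply: eq_bigr => k _; rewrite mulrC ReRCM.
Qed.

Lemma diag_coord n (P : 'M[C]_n) h k : P \is unitarymx ->
  complex.Re ((P *m (adj P *m dg h *m P) *m adj P) k k) = h k.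
Proof.
move=> hP; rewrite !mulmxA (unitary_mulV hP) mul1mx -mulmxA (unitary_mulV hP) mulmx1.
by rewrite dg_entry eqxx mulr1n.
Qed.

Lemma conj_coord n (P : 'M[C]_n) h : P \is unitarymx ->
  P *m (adj P *m dg h *m P) *m adj P = dg h.
Proof.
by move=> hP; rewrite !mulmxA (unitary_mulV hP) mul1mx -mulmxA (unitary_mulV hP) mulmx1.
Qed.

Lemma tens_dg n m (g : 'I_n -> R) (h : 'I_m -> R) :
  tens (dg g) (dg h) = dg (fun a => g (uix a).1 * h (uix a).2).
Proof.
apply/matrixP => a b.
case: (mxtens.mxtens_indexP a) => i j; case: (mxtens.mxtens_indexP b) => k l.
rewrite tensE !dg_entry idx_eq xpair_eqE mxtens.mxtens_indexK /= RCM.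
by case: (i == k); case: (j == l); rewrite /= ?mulr1n ?mulr0n ?mulr0 ?mul0r.
Qed.

Lemma dec_tens n m (P A : 'M[C]_n) (Q B : 'M[C]_m) g h :
  isdec P g A -> isdec Q h B ->
  isdec (tens P Q) (fun a => g (uix a).1 * h (uix a).2) (tens A B).
Proof.
move=> [hP ->] [hQ ->]; split; first exact: tens_unitary.
rewrite adj_tens -!tens_mul tens_dg; reflexivity.
Qed.

Lemma dec_one n (P : 'M[C]_n) : P \is unitarymx -> isdec P (fun _ => 1) 1%:M.
Proof. move=> hP; split; first exact: hP. rewrite dg1 mulmx1 (unitary_Vmul hP); reflexivity. Qed.

Lemma dec_scale n (P A : 'M[C]_n) h (c : R) : isdec P h A ->
  isdec P (fun k => c * h k) (RC c *: A).
Proof.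
move=> [hP ->]; split; first exact: hP.
have -> : dg (fun k => c * h k) = RC c *: dg h.
  apply/matrixP => i j; rewrite !mxE RCM.
  by case: (_ == _); rewrite ?mulr1n ?mulr0n ?mulr0.
rewrite -scalemxAr -scalemxAl; reflexivity.
Qed.

Lemma dec_herm n (P A : 'M[C]_n) h : isdec P h A -> adj A = A.
Proof. move=> [hP ->]; rewrite !adj_mul adjK adj_dg mulmxA; reflexivity. Qed.

Lemma adj_hermsym n (A : 'M[C]_n) : adj A = A -> A \is hermsymmx.
Proof. move=> h; apply/is_hermitianmxP; by rewrite expr0 scale1r -adjE h. Qed.

End LibB.

Section LibC.
Variable R : realType.
Local Notation C := R[i].
Local Notation idx := mxtens.mxtens_index.
Local Notation uix := mxtens.mxtens_unindex.

Lemma ln_le_sub1 (x : R) : 0 < x -> ln x <= x - 1.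
Proof.
move=> hx; have := expR_ge1Dx (ln x); rewrite lnK ?posrE //; lra.
Qed.

Lemma sum_gt0 n (hn : (0 < n)%N) (F : 'I_n -> R) : (forall i, 0 < F i) -> 0 < \sum_i F i.
Proof.
move=> hF; rewrite (bigD1 (Ordinal hn)) //=.
have := hF (Ordinal hn); have : 0 <= \sum_(i | i != Ordinal hn) F i.
  by apply: sumr_ge0 => i _; apply: ltW.
lra.
Qed.

Lemma Re_normsq (z : C) : 0 <= complex.Re (z * Num.conj z).
Proof. case: z => a b /=; rewrite mulrN opprK; apply: addr_ge0; exact: sqr_ge0. Qed.

Lemma sum_lin3 n (f g h t : 'I_n -> R) (a b c : R) :
  \sum_i (a * f i + b * g i + c * h i) * t i =
  a * \sum_i f i * t i + b * \sum_i g i * t i + c * \sum_i h i * t i.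
Proof.
rewrite !mulr_sumr -!big_split /=; apply: eq_bigr => i _; ring.
Qed.

Lemma dg_ext n (g h : 'I_n -> R) : (forall k, g k = h k) -> dg g = dg h.
Proof. by move=> e; apply/matrixP => i j; rewrite !dg_entry e. Qed.

Lemma partZ_dec n (P H : 'M[C]_n) h (beta : R) : isdec P h H ->
  partZ beta H = \sum_k expR (- beta * h k).
Proof.
move=> hd; rewrite /partZ /boltz (mfun_dec _ hd) (tr_conj _ hd.1) tr_dg; reflexivity.
Qed.

Lemma gibbs_dec n (P H : 'M[C]_n) h (beta : R) : isdec P h H ->
  isdec P (fun k => expR (- beta * h k) / partZ beta H) (gibbs beta H).
Proof.
move=> hd; rewrite /gibbs /boltz.
have hd2 : isdec P (fun k => expR (- beta * h k)) (mfun (fun x => expR (- beta * x)) H).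
  split; first exact: hd.1.
  exact: (mfun_dec _ hd).
have [hP e] := dec_scale (partZ beta H)^-1 hd2.
split; first exact: hP.
rewrite e (@dg_ext _ (fun k => (partZ beta H)^-1 * expR (- beta * h k))
   (fun k => expR (- beta * h k) / partZ beta H)); first reflexivity.
by move=> k; rewrite mulrC.
Qed.

Lemma sum_gibbs n (h : 'I_n -> R) (beta : R) (hn : (0 < n)%N) :
  \sum_k (expR (- beta * h k) / \sum_j expR (- beta * h j)) = 1.
Proof.
rewrite -mulr_suml divff //; apply/lt0r_neq0/sum_gt0 => // k; exact: expR_gt0.
Qed.

Lemma ln_gibbs (x Z : R) : 0 < Z -> ln (expR x / Z) = x - ln Z.
Proof. by move=> hZ; rewrite ln_div ?posrE ?expR_gt0 // expRK. Qed.

Lemma tens_sumZl n m I (r : seq I) (c : I -> R) (A : I -> 'M[C]_n) (B : 'M[C]_m) :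
  tens (\sum_(i <- r) RC (c i) *: A i) B = \sum_(i <- r) RC (c i) *: tens (A i) B.
Proof.
apply/matrixP => a b; rewrite !mxE summxE mulr_suml summxE.
by apply: eq_bigr => i _; rewrite !mxE mulrA.
Qed.

Lemma conj_sumZ n m I (r : seq I) (c : I -> R) (U : 'M[C]_(n, m)) (Y : I -> 'M[C]_m) (U' : 'M[C]_(m, n)) :
  \sum_(i <- r) RC (c i) *: (U *m Y i *m U') = U *m (\sum_(i <- r) RC (c i) *: Y i) *m U'.
Proof.
rewrite mulmx_sumr mulmx_suml; apply: eq_bigr => i _.
by rewrite -scalemxAr -scalemxAl.
Qed.

Lemma proj_sum n (V : 'M[C]_n) (q : 'I_n -> R) :
  \sum_i RC (q i) *: proj V i = V *m dg q *m adj V.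
Proof.
apply/matrixP => a b; rewrite /dg mul_mx_diag summxE [RHS]mxE; apply: eq_bigr => i _.
rewrite !mxE big_ord1 !mxE; ring.
Qed.

Lemma coord_conj n (M : 'M[C]_n) (r : 'I_n -> R) b :
  complex.Re ((M *m dg r *m adj M) b b) =
  \sum_a r a * complex.Re (M b a * Num.conj (M b a)).
Proof.
rewrite mxE Re_sum; apply: eq_bigr => a _.
rewrite /dg mul_mx_diag !mxE -ReRCM; congr complex.Re; ring.
Qed.

Lemma unitary_rowsum n (M : 'M[C]_n) b : M \is unitarymx ->
  \sum_a complex.Re (M b a * Num.conj (M b a)) = 1.
Proof.
move=> hM; transitivity (complex.Re ((M *m adj M) b b)).
  rewrite mxE Re_sum; apply: eq_bigr => a _; rewrite !mxE; reflexivity.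
by rewrite (unitary_mulV hM) mxE eqxx.
Qed.

Lemma unitary_colsum n (M : 'M[C]_n) a : M \is unitarymx ->
  \sum_b complex.Re (M b a * Num.conj (M b a)) = 1.
Proof.
move=> hM; transitivity (complex.Re ((adj M *m M) a a)).
  rewrite mxE Re_sum; apply: eq_bigr => b _; rewrite !mxE mulrC; reflexivity.
by rewrite (unitary_Vmul hM) mxE eqxx.
Qed.

Lemma klein_coord N (r th s s' : 'I_N -> R) (Pm : 'I_N -> 'I_N -> R) :
  (forall a, 0 <= r a) -> (forall b a, 0 <= Pm b a) ->
  (forall a, \sum_b Pm b a = 1) -> (forall b, \sum_a Pm b a = 1) ->
  (forall b, th b = \sum_a Pm b a * r a) -> (forall b, 0 <= s b) ->
  \sum_a r a = \sum_b s b ->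
  (forall b, 0 < s b -> s' b = ln (s b)) -> (forall b, s b = 0 -> th b = 0) ->
  \sum_b th b * s' b <= \sum_a r a * ln (r a).
Proof.
move=> hr hP hcol hrow hth hs hsum hs' hs0.
have eL : \sum_a r a * ln (r a) = \sum_a \sum_b Pm b a * (r a * ln (r a)).
  by apply: eq_bigr => a _; rewrite -mulr_suml hcol mul1r.
have eR : \sum_b th b * s' b = \sum_a \sum_b Pm b a * (r a * s' b).
  rewrite exchange_big /=; apply: eq_bigr => b _; rewrite hth mulr_suml.
  by apply: eq_bigr => a _; rewrite mulrA.
have e0 : \sum_a \sum_b Pm b a * (r a - s b) = 0.
  have -> : \sum_a \sum_b Pm b a * (r a - s b) =
     \sum_a r a * \sum_b Pm b a - \sum_b s b * \sum_a Pm b a.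
    have e1 : \sum_b s b * \sum_a Pm b a = \sum_a \sum_b Pm b a * s b.
      rewrite exchange_big /=; apply: eq_bigr => b _; rewrite mulr_sumr.
      by apply: eq_bigr => a _; ring.
    rewrite e1 -sumrB; apply: eq_bigr => a _.
    rewrite mulr_sumr -sumrB; apply: eq_bigr => b _; ring.
  under eq_bigr => a _ do rewrite hcol mulr1.
  under [X in _ - X = _]eq_bigr => b _ do rewrite hrow mulr1.
  by rewrite hsum subrr.
have term : forall a b, Pm b a * (r a - s b) <=
    Pm b a * (r a * ln (r a)) - Pm b a * (r a * s' b).
  move=> a b.
  have [ra0|ra_pos] := eqVneq (r a) 0.
    rewrite ra0 !mul0r !mulr0 subrr sub0r mulrN oppr_le0.
    exact: mulr_ge0 (hP b a) (hs b).
  have hra : 0 < r a by rewrite lt0r ra_pos hr.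
  have [sb0|sb_pos] := eqVneq (s b) 0.
    have h1 := hs0 b sb0; rewrite hth in h1.
    have := @psumr_eq0P _ _ predT (fun a => Pm b a * r a) (fun a _ => mulr_ge0 (hP b a) (hr a)) h1 a isT.
    move=> /eqP; rewrite mulf_eq0 (negbTE ra_pos) orbF => /eqP ->.
    by rewrite !mul0r subrr.
  have hsb : 0 < s b by rewrite lt0r sb_pos hs.
  rewrite -mulrBr; apply: ler_wpM2l; first exact: hP.
  rewrite hs' //.
  have := ln_le_sub1 (divr_gt0 hsb hra); rewrite ln_div ?posrE //.
  move=> h; have h2 := ler_wpM2l (ltW hra) h.
  have e : r a * (s b / r a - 1) = s b - r a.
    by rewrite mulrBr mulr1 mulrCA divff ?mulr1 // gt_eqF.
  rewrite e in h2; lra.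
have : \sum_a \sum_b Pm b a * (r a - s b) <=
  \sum_a (\sum_b Pm b a * (r a * ln (r a)) - \sum_b Pm b a * (r a * s' b)).
  apply: ler_sum => a _; rewrite -sumrB.
  by apply: ler_sum => b _; exact: term.
by rewrite e0 sumrB subr_ge0 eL eR.
Qed.

End LibC.

Section LibD.
Variable R : realType.
Local Notation C := R[i].
Local Notation idx := mxtens.mxtens_index.
Local Notation uix := mxtens.mxtens_unindex.

Lemma coord_of_dec n (P A : 'M[C]_n) h : isdec P h A ->
  forall a, complex.Re ((P *m A *m adj P) a a) = h a.
Proof. by move=> [hP ->] a; exact: diag_coord. Qed.

Lemma Re_tr_isdec n (P A : 'M[C]_n) h : isdec P h A -> forall Z,
  complex.Re (\tr (Z *m A)) = \sum_k h k * complex.Re ((P *m Z *m adj P) k k).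
Proof. by move=> [hP ->] Z; exact: Re_tr_dec. Qed.

Lemma mln_isdec n (P A : 'M[C]_n) h : isdec P h A -> isdec P (fun k => ln (h k)) (mln A).
Proof. by move=> hd; split; [exact: hd.1 | exact: mfun_dec]. Qed.

Lemma tr_sum n I (r : seq I) (F : I -> 'M[C]_n) :
  \tr (\sum_(i <- r) F i) = \sum_(i <- r) \tr (F i).
Proof.
rewrite /mxtrace; under eq_bigr do rewrite summxE; exact: exchange_big.
Qed.

Lemma sum_lin2 n (f g t : 'I_n -> R) (a b : R) :
  \sum_i (a * f i + b * g i) * t i = a * \sum_i f i * t i + b * \sum_i g i * t i.
Proof. rewrite !mulr_sumr -!big_split /=; apply: eq_bigr => i _; ring. Qed.

Lemma sum_prod_ln n m (q : 'I_n -> R) (t : 'I_m -> R) :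
  (forall i, 0 < q i) -> (forall l, 0 < t l) -> \sum_i q i = 1 -> \sum_l t l = 1 ->
  \sum_(a < n * m) (q (uix a).1 * t (uix a).2) * ln (q (uix a).1 * t (uix a).2)
  = \sum_i q i * ln (q i) + \sum_l t l * ln (t l).
Proof.
move=> hq ht sq st.
rewrite sum_tensR.
under eq_bigr => i _ do under eq_bigr => l _ do
  rewrite mxtens.mxtens_indexK /= lnM ?posrE // mulrDr.
under eq_bigr => i _ do rewrite big_split /=.
rewrite big_split /=; congr (_ + _).
  apply: eq_bigr => i _.
  under eq_bigr => l _ do rewrite [_ * t l]mulrC -mulrA.
  by rewrite -mulr_suml st mul1r.
rewrite exchange_big /=; apply: eq_bigr => l _.
under eq_bigr => i _ do rewrite -mulrA.
by rewrite -mulr_suml sq mul1r.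
Qed.

Lemma sum_prod n m (q : 'I_n -> R) (t : 'I_m -> R) :
  \sum_(a < n * m) (q (uix a).1 * t (uix a).2) = (\sum_i q i) * \sum_l t l.
Proof.
rewrite sum_tensR mulr_suml; apply: eq_bigr => i _; rewrite mulr_sumr.
by apply: eq_bigr => l _; rewrite mxtens.mxtens_indexK.
Qed.

Lemma conj_by n (W X A : 'M[C]_n) (r : 'I_n -> R) : isdec W r A ->
  X *m A *m adj X = (X *m adj W) *m dg r *m adj (X *m adj W).
Proof. move=> [hW ->]; rewrite adj_mul adjK !mulmxA; reflexivity. Qed.

Lemma ptrB_diag n m (Z : 'M[C]_(n * m)) k :
  complex.Re (ptrB Z k k) = \sum_l complex.Re (Z (idx (k, l)) (idx (k, l))).
Proof. by rewrite mxE Re_sum. Qed.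

Lemma sum_tens_fst n m (t : 'I_(n * m) -> R) (f g : 'I_n -> R) :
  (forall k, \sum_l t (idx (k, l)) = g k) ->
  \sum_b t b * f (uix b).1 = \sum_k g k * f k.
Proof.
move=> H; rewrite sum_tensR; apply: eq_bigr => k _.
rewrite -H mulr_suml; apply: eq_bigr => l _.
by rewrite mxtens.mxtens_indexK.
Qed.
End LibD.

Section LibE.
Variable R : realType.
Lemma sum_aff n (t f : 'I_n -> R) (a b : R) :
  \sum_i t i * (a * f i + b) = a * \sum_i t i * f i + b * \sum_i t i.
Proof. rewrite !mulr_sumr -big_split /=; apply: eq_bigr => i _; ring. Qed.

Lemma jensen_exp n (p w : 'I_n -> R) (c : R) :
  (forall i, 0 <= p i) -> \sum_i p i = 1 ->
  expR (c * \sum_i p i * w i) <= \sum_i p i * expR (c * w i).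
Proof.
move=> hp sp; set a := \sum_i p i * w i.
have h : forall i, p i * (expR (c * a) * (1 + c * (w i - a))) <= p i * expR (c * w i).
  move=> i; apply: ler_wpM2l; first exact: hp.
  have -> : c * w i = c * a + c * (w i - a) by ring.
  rewrite expRD; apply: ler_wpM2l; first exact: expR_ge0.
  exact: expR_ge1Dx.
apply: le_trans (ler_sum _ (fun i _ => h i)).
have -> : \sum_i p i * (expR (c * a) * (1 + c * (w i - a))) =
   expR (c * a) * (\sum_i p i + c * (\sum_i p i * w i - a * \sum_i p i)).
  rewrite mulr_sumr [X in _ * (_ + _ * (_ - X))]mulr_sumr -sumrB mulr_sumr -big_split /=.
  rewrite mulr_sumr; apply: eq_bigr => i _; ring.
by rewrite sp -/a mulr1 subrr mulr0 addr0 mulr1.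
Qed.
Lemma relentE (N : nat) (A B : 'M[R[i]]_N) x y :
  complex.Re (\tr (A *m mln A)) = x -> complex.Re (\tr (A *m mln B)) = y ->
  relent A B = x - y.
Proof. move=> <- <-; reflexivity. Qed.

Lemma exp_term (bS x y z w : R) :
  expR (- bS * y) / w * expR (- bS * (x - y - z)) = expR (- bS * x) * (expR (bS * z) / w).
Proof.
rewrite mulrAC -expRD [RHS]mulrA -expRD; congr (expR _ / w); ring.
Qed.

Lemma exp_final (bS bB Zl Z0 Zt Q : R) : 0 < bS -> 0 < Zl -> 0 < Z0 ->
  Zl * expR (bS * Q) / Z0 =
  expR (- bS * (- bS^-1 * ln Zt - - bS^-1 * ln Z0)) * expR (- (ln Zt - ln Zl - bB * Q))
  * expR (- (bB - bS) * Q).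
Proof.
move=> hb hl h0.
rewrite -!expRD -{1}(lnK hl) -{1}(lnK h0) -expRD -expRN -expRD; congr expR.
field; exact: lt0r_neq0.
Qed.

Lemma final_ineq (bS bB a Zl Z0 Zt Q Lr A1 A2 QB lZB : R) : 0 < bS -> 0 < Zl -> 0 < Z0 ->
  expR (- bS * a) <= Zl * expR (bS * Q) / Z0 -> Q = QB - A2 ->
  Lr + (- bB * A2 - lZB) <= (- bS * A1 - ln Zl) + (- bB * QB - lZB) ->
  (- bS^-1 * ln Zt - - bS^-1 * ln Z0) + bS^-1 * (Lr - (- bS * A1 - ln Zt))
    + (bB - bS) / bS * Q <= a.
Proof.
move=> hb hl h0 hexp hQ hK.
have e1 : Zl * expR (bS * Q) / Z0 = expR (ln Zl + bS * Q - ln Z0).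
  by rewrite -{1}(lnK hl) -{1}(lnK h0) -expRD -expRB.
rewrite e1 ler_expR in hexp.
rewrite -(ler_pM2l hb).
have -> : bS * ((- bS^-1 * ln Zt - - bS^-1 * ln Z0) + bS^-1 * (Lr - (- bS * A1 - ln Zt))
    + (bB - bS) / bS * Q) = ln Z0 - ln Zt + (Lr + bS * A1 + ln Zt) + (bB - bS) * Q.
  field; exact: lt0r_neq0.
subst Q; lra.
Qed.
End LibE.

Section MainSec.
Variable R : realType.
Local Notation C := R[i].
Local Notation idx := mxtens.mxtens_index.
Local Notation uix := mxtens.mxtens_unindex.

Variables (n m : nat) (hn : (0 < n)%N) (hm : (0 < m)%N)
  (HS0 HSt : 'M[C]_n) (HB : 'M[C]_m) (U : 'M[C]_(n * m))
  (bS bB : R) (V : 'M[C]_n) (e : 'I_n -> R).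
Hypotheses (hU : U \is unitarymx) (hbS : 0 < bS) (hbB : 0 < bB)
  (hV : V \is unitarymx) (hev : forall i, HS0 *m col i V = RC (e i) *: col i V).
Variables (P : 'M[C]_n) (hS : 'I_n -> R) (Pb : 'M[C]_m) (hB : 'I_m -> R).
Hypotheses (decS : isdec P hS HSt) (decB : isdec Pb hB HB).

Local Notation tB := (tauB HB bB).
Local Notation tS := (tauSt HSt bS).
Local Notation Th := (Theta HSt HB U bS bB V).
Local Notation Ef := (Efin HSt HB U bB V).
Local Notation Zl := (Ztil HSt HB U bS bB V).
Local Notation Q := (Qtil HSt HB U bS bB V).
Local Notation Zt := (partZ bS HSt).
Local Notation ZB := (partZ bB HB).
Local Notation Z0 := (partZ bS HS0).

Let tSv k := expR (- bS * hS k) / Zt.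
Let tBv l := expR (- bB * hB l) / ZB.
Let q i := expR (- bS * Ef i) / Zl.
Let r (a : 'I_(n * m)) := q (uix a).1 * tBv (uix a).2.
Let Y := tens (adj V) Pb.
Let W := Y *m adj U.

Lemma hP : P \is unitarymx. Proof. exact: decS.1. Qed.
Lemma hPb : Pb \is unitarymx. Proof. exact: decB.1. Qed.

Lemma decV : isdec (adj V) e HS0.
Proof.
split; first exact: unitary_adj.
have hHV : HS0 *m V = V *m dg e.
  apply/matrixP => a j; have := congr1 (fun M : 'M[C]_(n, 1) => M a 0) (hev j).
  rewrite /dg mul_mx_diag !mxE => h; rewrite [RHS]mulrC -h; apply: eq_bigr => k _; rewrite !mxE; reflexivity.
rewrite adjK -hHV -mulmxA (unitary_mulV hV) mulmx1; reflexivity.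
Qed.

Lemma Z0E : Z0 = \sum_i expR (- bS * e i).
Proof. exact: partZ_dec decV. Qed.
Lemma ZtE : Zt = \sum_k expR (- bS * hS k).
Proof. exact: partZ_dec decS. Qed.
Lemma ZBE : ZB = \sum_l expR (- bB * hB l).
Proof. exact: partZ_dec decB. Qed.

Lemma Z0_gt0 : 0 < Z0.
Proof. rewrite Z0E; apply: sum_gt0 => // i; exact: expR_gt0. Qed.
Lemma Zt_gt0 : 0 < Zt.
Proof. rewrite ZtE; apply: sum_gt0 => // i; exact: expR_gt0. Qed.
Lemma ZB_gt0 : 0 < ZB.
Proof. rewrite ZBE; apply: sum_gt0 => // i; exact: expR_gt0. Qed.
Lemma Zl_gt0 : 0 < Zl.
Proof. apply: sum_gt0 => // i; exact: expR_gt0. Qed.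

Lemma decTS : isdec P tSv tS.
Proof. exact: gibbs_dec decS. Qed.
Lemma decTB : isdec Pb tBv tB.
Proof. exact: gibbs_dec decB. Qed.

Lemma tSv_gt0 k : 0 < tSv k.
Proof. by rewrite /tSv divr_gt0 ?expR_gt0 ?Zt_gt0. Qed.
Lemma tBv_gt0 k : 0 < tBv k.
Proof. by rewrite /tBv divr_gt0 ?expR_gt0 ?ZB_gt0. Qed.
Lemma q_gt0 i : 0 < q i.
Proof. by rewrite /q divr_gt0 ?expR_gt0 ?Zl_gt0. Qed.
Lemma r_gt0 a : 0 < r a.
Proof. rewrite /r; apply: mulr_gt0; [exact: q_gt0 | exact: tBv_gt0]. Qed.

Lemma sum_q : \sum_i q i = 1.
Proof. exact: sum_gibbs. Qed.
Lemma sum_tBv : \sum_l tBv l = 1.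
Proof. rewrite /tBv ZBE; exact: sum_gibbs. Qed.
Lemma sum_r : \sum_a r a = 1.
Proof. by rewrite /r sum_prod sum_q sum_tBv mulr1. Qed.

Lemma ln_tSv k : ln (tSv k) = - bS * hS k - ln Zt.
Proof. exact: ln_gibbs Zt_gt0. Qed.
Lemma ln_tBv l : ln (tBv l) = - bB * hB l - ln ZB.
Proof. exact: ln_gibbs ZB_gt0. Qed.
Lemma ln_q i : ln (q i) = - bS * Ef i - ln Zl.
Proof. exact: ln_gibbs Zl_gt0. Qed.

Lemma hW : W \is unitarymx.
Proof.
apply: mul_unitarymx; last exact: unitary_adj.
apply: tens_unitary; [exact: unitary_adj | exact: hPb].
Qed.

Lemma ThE : Th = U *m tens (V *m dg q *m adj V) tB *m adj U.
Proof.
transitivity (\sum_i RC (q i) *: (U *m tens (proj V i) tB *m adj U)); first reflexivity.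
by rewrite conj_sumZ -tens_sumZl proj_sum.
Qed.

Lemma decTh : isdec W r Th.
Proof.
split; first exact: hW.
have dq : isdec (adj V) q (V *m dg q *m adj V).
  split; [exact: unitary_adj | rewrite adjK; reflexivity].
have [_ dt] := dec_tens dq decTB.
rewrite ThE dt /W /Y adj_mul adjK !mulmxA; reflexivity.
Qed.


Lemma hX : tens P Pb \is unitarymx.
Proof. exact: tens_unitary hP hPb. Qed.

Lemma tr_one : complex.Re (\tr (Th *m 1%:M)) = 1.
Proof.
rewrite (Re_tr_isdec (dec_one hW) Th).
under eq_bigr do rewrite (coord_of_dec decTh) mul1r.
exact: sum_r.
Qed.

Lemma T1 : complex.Re (\tr (Th *m mln Th)) = \sum_a r a * ln (r a).
Proof.
rewrite (Re_tr_isdec (mln_isdec decTh) Th); apply: eq_bigr => a _.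
by rewrite (coord_of_dec decTh) mulrC.
Qed.

Lemma T1' : \sum_a r a * ln (r a) =
  (- bS * \sum_i q i * Ef i - ln Zl) + (- bB * \sum_l tBv l * hB l - ln ZB).
Proof.
rewrite /r (sum_prod_ln q_gt0 tBv_gt0 sum_q sum_tBv).
under eq_bigr do rewrite ln_q.
under [X in _ + X = _]eq_bigr do rewrite ln_tBv.
rewrite !sum_aff sum_q sum_tBv !mulr1; reflexivity.
Qed.

Lemma T2 : complex.Re (\tr (Th *m mln (tens tS tB))) =
  - bS * complex.Re (\tr (Th *m tens HSt 1%:M))
  - bB * complex.Re (\tr (Th *m tens 1%:M HB)) - (ln Zt + ln ZB).
Proof.
rewrite (Re_tr_isdec (mln_isdec (dec_tens decTS decTB)) Th).
have e0 : forall a : 'I_(n * m), ln (tSv (uix a).1 * tBv (uix a).2) =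
   - bS * (hS (uix a).1 * 1) + - bB * (1 * hB (uix a).2) + - (ln Zt + ln ZB) * 1.
  move=> a; rewrite (lnM (tSv_gt0 _) (tBv_gt0 _)) ln_tSv ln_tBv; ring.
under eq_bigr do rewrite e0.
rewrite sum_lin3.
rewrite -(Re_tr_isdec (dec_tens decS (dec_one hPb)) Th).
rewrite -(Re_tr_isdec (dec_tens (dec_one hP) decB) Th).
rewrite -(Re_tr_isdec (dec_one hX) Th) tr_one; ring.
Qed.

Lemma T3 : \sum_i q i * Ef i = complex.Re (\tr (Th *m tens HSt 1%:M)).
Proof.
rewrite mxtrace_mulC.
transitivity (complex.Re (\tr (tens HSt 1%:M *m
  \sum_i RC (q i) *: (U *m tens (proj V i) tB *m adj U)))); last reflexivity.
rewrite mulmx_sumr tr_sum Re_sum; apply: eq_bigr => i _.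
rewrite -scalemxAr mxtraceZ ReRCM -ptrB_tr; reflexivity.
Qed.

Lemma T4 : complex.Re (\tr (HB *m tB)) = \sum_l tBv l * hB l.
Proof.
rewrite (Re_tr_isdec decTB HB); apply: eq_bigr => l _.
by rewrite (coord_of_dec decB).
Qed.

Lemma QE : Q = \sum_l tBv l * hB l - complex.Re (\tr (Th *m tens 1%:M HB)).
Proof.
rewrite -T4 (mxtrace_mulC Th); reflexivity.
Qed.

Lemma DTh : relent Th (tens tS tB) = ln Zt - ln Zl - bB * Q.
Proof.
rewrite (relentE T1 T2) T1' QE -T3.
set x1 := \sum_i q i * Ef i.
set x2 := \sum_l tBv l * hB l.
set x3 := complex.Re (\tr (Th *m tens 1%:M HB)).
clearbody x1 x2 x3.
ring.
Qed.


Lemma avgE : avgP HS0 bS e (fun i => expR (- bS * Wtil HSt HB U bS bB V e i))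
  = Zl * expR (bS * Q) / Z0.
Proof.
rewrite /avgP.
transitivity (\sum_i expR (- bS * Ef i) * (expR (bS * Q) / Z0)).
  apply: eq_bigr => i _; rewrite /Wtil /DeltaE; exact: exp_term.
rewrite -mulr_suml mulrA; reflexivity.
Qed.

Lemma part1 : avgP HS0 bS e (fun i => expR (- bS * Wtil HSt HB U bS bB V e i))
    = expR (- bS * DeltaF HS0 HSt bS)
      * expR (- relent Th (tens tS tB))
      * expR (- (bB - bS) * Q).
Proof.
rewrite DTh avgE /DeltaF /freeF; apply: exp_final.
- exact: hbS.
- exact: Zl_gt0.
- exact: Z0_gt0.
Qed.

Lemma rho_herm : ptrB Th \is hermsymmx.
Proof. apply: adj_hermsym; rewrite ptrB_adj (dec_herm decTh); reflexivity. Qed.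

Variables (E : 'M[C]_n) (lam : 'I_n -> R).
Hypothesis decR : isdec E lam (ptrB Th).

Lemma hE : E \is unitarymx. Proof. exact: decR.1. Qed.

Lemma rho_tr_one : complex.Re (\tr (ptrB Th *m 1%:M)) = 1.
Proof.
transitivity (complex.Re (\tr (1%:M *m ptrB Th))); first by rewrite mulmx1 mul1mx.
rewrite ptrB_tr tens11 mul1mx.
have := tr_one; rewrite mulmx1; exact.
Qed.

Lemma sum_lam : \sum_k lam k = 1.
Proof.
have := Re_tr_isdec (dec_one hE) (ptrB Th); rewrite rho_tr_one => ->.
by apply: eq_bigr => k _; rewrite (coord_of_dec decR) mul1r.
Qed.

Lemma R1 : complex.Re (\tr (ptrB Th *m mln (ptrB Th))) = \sum_k lam k * ln (lam k).
Proof.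
rewrite (Re_tr_isdec (mln_isdec decR) (ptrB Th)); apply: eq_bigr => k _.
by rewrite (coord_of_dec decR) mulrC.
Qed.

Lemma rhoHS : complex.Re (\tr (ptrB Th *m HSt)) = complex.Re (\tr (Th *m tens HSt 1%:M)).
Proof. rewrite (mxtrace_mulC (ptrB Th)) ptrB_tr (mxtrace_mulC (tens HSt 1%:M)); reflexivity. Qed.

Lemma R2 : complex.Re (\tr (ptrB Th *m mln tS)) =
  - bS * complex.Re (\tr (Th *m tens HSt 1%:M)) - ln Zt.
Proof.
rewrite (Re_tr_isdec (mln_isdec decTS) (ptrB Th)).
have e0 : forall k, ln (tSv k) = - bS * hS k + - ln Zt * 1.
  by move=> k; rewrite ln_tSv mulr1.
under eq_bigr do rewrite e0.
rewrite sum_lin2 -(Re_tr_isdec decS (ptrB Th)) -(Re_tr_isdec (dec_one hP) (ptrB Th)).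
rewrite rho_tr_one rhoHS mulr1; reflexivity.
Qed.

Lemma DR : relent (ptrB Th) tS =
  \sum_k lam k * ln (lam k) - (- bS * complex.Re (\tr (Th *m tens HSt 1%:M)) - ln Zt).
Proof. exact: relentE R1 R2. Qed.

Let Xe := tens E Pb.
Let M := Xe *m adj W.
Let th b := complex.Re ((Xe *m Th *m adj Xe) b b).
Let Pm b a := complex.Re (M b a * Num.conj (M b a)).

Lemma hXe : Xe \is unitarymx. Proof. exact: tens_unitary hE hPb. Qed.
Lemma hM : M \is unitarymx.
Proof. apply: mul_unitarymx; [exact: hXe | exact: unitary_adj hW]. Qed.

Lemma K1 b : th b = \sum_a Pm b a * r a.
Proof.
rewrite /th (conj_by Xe decTh) coord_conj; apply: eq_bigr => a _.
by rewrite mulrC.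
Qed.

Lemma K4 k : \sum_l th (idx (k, l)) = lam k.
Proof.
rewrite /th -ptrB_diag /Xe adj_tens ptrB_conj; last exact: hPb.
exact: (coord_of_dec decR k).
Qed.

Lemma th_ge0 b : 0 <= th b.
Proof.
rewrite K1; apply: sumr_ge0 => a _; apply: mulr_ge0; first exact: Re_normsq.
exact: ltW (r_gt0 a).
Qed.

Lemma lam_ge0 k : 0 <= lam k.
Proof. rewrite -K4; apply: sumr_ge0 => l _; exact: th_ge0. Qed.

Lemma klein : \sum_b th b * (ln (lam (uix b).1) + ln (tBv (uix b).2))
  <= \sum_a r a * ln (r a).
Proof.
apply: (@klein_coord _ _ r th (fun b => lam (uix b).1 * tBv (uix b).2) _ Pm).
- by move=> a; exact: ltW (r_gt0 a).
- by move=> b a; exact: Re_normsq.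
- by move=> a; exact: unitary_colsum hM.
- by move=> b; exact: unitary_rowsum hM.
- exact: K1.
- by move=> b; apply: mulr_ge0; [exact: lam_ge0 | exact: ltW (tBv_gt0 _)].
- by rewrite sum_r sum_prod sum_lam sum_tBv mulr1.
- move=> b hb.
  have hl : 0 < lam (uix b).1.
    rewrite lt0r lam_ge0 andbT; apply/eqP => h0; move: hb; rewrite h0 mul0r ltxx //.
  by rewrite (lnM hl (tBv_gt0 _)).
- move=> b /eqP; rewrite mulf_eq0 (negbTE (lt0r_neq0 (tBv_gt0 _))) orbF => /eqP h0.
  have h1 := K4 (uix b).1; rewrite h0 in h1.
  have := @psumr_eq0P _ _ predT (fun l => th (idx ((uix b).1, l))) (fun l _ => th_ge0 _) h1 (uix b).2 isT.
  move=> h; rewrite [X in th X](_ : b = idx ((uix b).1, (uix b).2)); first exact: h.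
  by rewrite -surjective_pairing mxtens.mxtens_unindexK.
Qed.

Lemma A2E : complex.Re (\tr (Th *m tens 1%:M HB)) = \sum_b th b * hB (uix b).2.
Proof.
rewrite (Re_tr_isdec (dec_tens (dec_one hE) decB) Th); apply: eq_bigr => b _.
by rewrite mul1r mulrC.
Qed.

Lemma sum_th : \sum_b th b = 1.
Proof.
rewrite -tr_one (Re_tr_isdec (dec_one hXe) Th); apply: eq_bigr => b _.
by rewrite mul1r.
Qed.

Lemma kleinE : \sum_b th b * (ln (lam (uix b).1) + ln (tBv (uix b).2)) =
  \sum_k lam k * ln (lam k) + (- bB * complex.Re (\tr (Th *m tens 1%:M HB)) - ln ZB).
Proof.
under eq_bigr do rewrite mulrDr.
rewrite big_split /=; congr (_ + _).
  exact: sum_tens_fst K4.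
under eq_bigr do rewrite ln_tBv.
by rewrite sum_aff A2E sum_th mulr1.
Qed.

Lemma part2 : avgP HS0 bS e (Wtil HSt HB U bS bB V e) >=
  DeltaF HS0 HSt bS + bS^-1 * relent (ptrB Th) tS + (bB - bS) / bS * Q.
Proof.
rewrite DR /DeltaF /freeF.
apply: (@final_ineq R bS bB _ Zl Z0 Zt Q _ _ (complex.Re (\tr (Th *m tens 1%:M HB))) (\sum_l tBv l * hB l) (ln ZB)).
- exact: hbS.
- exact: Zl_gt0.
- exact: Z0_gt0.
- rewrite -avgE /avgP mulr_sumr.
  have := @jensen_exp _ n (fun i => expR (- bS * e i) / Z0) (Wtil HSt HB U bS bB V e) (- bS).
  rewrite -mulr_sumr; apply.
    by move=> i; apply: divr_ge0; [exact: expR_ge0 | exact: ltW Z0_gt0].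
  by rewrite Z0E; exact: sum_gibbs.
- exact: QE.
- rewrite -kleinE -T3 -T1'; exact: klein.
Qed.

End MainSec.

Unset Implicit Arguments. Set Strict Implicit.

Theorem theorem1 (R : realType) (n m : nat) (hn : (0 < n)%N) (hm : (0 < m)%N)
  (HS0 HSt : 'M[R[i]]_n) (HB : 'M[R[i]]_m) (U : 'M[R[i]]_(n * m))
  (betaS betaB : R) (V : 'M[R[i]]_n) (e : 'I_n -> R) :
  HS0 \is hermsymmx -> HSt \is hermsymmx -> HB \is hermsymmx ->
  U \is unitarymx -> 0 < betaS -> 0 < betaB ->
  V \is unitarymx -> (forall i, HS0 *m col i V = RC (e i) *: col i V) ->
  avgP HS0 betaS e (fun i => expR (- betaS * Wtil HSt HB U betaS betaB V e i))
    = expR (- betaS * DeltaF HS0 HSt betaS)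
      * expR (- relent (Theta HSt HB U betaS betaB V) (tens (tauSt HSt betaS) (tauB HB betaB)))
      * expR (- (betaB - betaS) * Qtil HSt HB U betaS betaB V)
  /\
  avgP HS0 betaS e (Wtil HSt HB U betaS betaB V e)
    >= DeltaF HS0 HSt betaS
       + betaS^-1 * relent (rhoTil HSt HB U betaS betaB V) (tauSt HSt betaS)
       + (betaB - betaS) / betaS * Qtil HSt HB U betaS betaB V.
Proof.
move=> hS0 hSt hHB hU hbS hbB hV hev.
have [P [hS decS]] := herm_dec hSt.
have [Pb [hB decB]] := herm_dec hHB.
have [E [lam decR]] := herm_dec (rho_herm HSt betaS betaB hU hV decB).
split.
  exact: (part1 hn hm betaB hU hbS hV hev decS decB).
exact: (part2 hn hm hU hbS hV hev decS decB decR).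
Qed.
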